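(* Let $V$ be a vector space over a field $F$ and let $n\ge 2$. If a widget with $n$ pairs in $V$ contains a legal subwidget, then the widget itself is legal.
   Context: A widget with $n$ pairs in $V$ is an indexed family of $n$ pairs of vectors $p_j=(p_j^+,p_j^-)$, $j=1,\dots,n$, in $V$. A section of a widget is a set of points containing at most one point from each pair. A widget with $n$ pairs is legal if every section spans a linear subspace of $V$ of dimension at most $n-1$. A subwidget of a widget with $n$ pairs is the widget formed by some $k$ of its pairs with $1\le k<n$; it is itself a widget with $k$ pairs, so it is legal if every one of its sections spans a subspace of dimension at most $k-1$. *)

(* Defs.v *)
From HB Require Import structures.
From mathcomp Require Import all_boot all_order all_algebra.
Set Implicit Arguments. Unset Strict Implicit. Unset Printing Implicit Defensive.
Import GRing.Theory.
Local Open Scope ring_scope.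

(* A widget with n pairs in V: w : 'I_n -> V * V, with p_j^+ = (w j).1,
   p_j^- = (w j).2. *)

Definition pt (V : Type) (p : V * V) (b : bool) : V := if b then p.1 else p.2.

(* "The set of points P spans a subspace of dimension at most k":
   span P is contained in the span of some k vectors b_0..b_(k-1),
   i.e. every point of P is a linear combination of them. *)
Definition span_dim_le (F : fieldType) (V : lmodType F) (P : V -> Prop) (k : nat) : Prop :=
  exists b : 'I_k -> V, forall v, P v ->
    exists c : 'I_k -> F, v = \sum_(i < k) c i *: b i.

(* The section of the (sub)widget indexed by S determined by the selection
   s : for each pair j in S, s j = None (no point taken), Some true (p_j^+),
   or Some false (p_j^-). *)
Definition section_pts (F : fieldType) (V : lmodType F) (n : nat)
  (w : 'I_n -> V * V) (S : {set 'I_n}) (s : 'I_n -> option bool) : V -> Prop :=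
  fun v => exists j, j \in S /\ exists b, s j = Some b /\ v = pt (w j) b.

Definition legal_on (F : fieldType) (V : lmodType F) (n : nat)
  (w : 'I_n -> V * V) (S : {set 'I_n}) : Prop :=
  forall s : 'I_n -> option bool, span_dim_le (section_pts w S s) (#|S|.-1).

Definition legal (F : fieldType) (V : lmodType F) (n : nat) (w : 'I_n -> V * V) : Prop :=
  legal_on w [set: 'I_n].

(* Main.v *)
Require Import Defs.
From mathcomp Require Import all_boot all_order all_algebra.
From mathcomp Require Import zify.
Set Implicit Arguments. Unset Strict Implicit. Unset Printing Implicit Defensive.
Import GRing.Theory.
Local Open Scope ring_scope.

Lemma span_union (F : fieldType) (V : lmodType F) (P Q : V -> Prop) a c :
  span_dim_le P a -> span_dim_le Q c ->
  span_dim_le (fun v => P v \/ Q v) (a + c).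
Proof.
move=> [b Hb] [b' Hb'].
exists (fun i => match split i with inl x => b x | inr y => b' y end).
move=> v [/Hb [k ->]|/Hb' [k ->]].
- exists (fun i => match split i with inl x => k x | inr _ => 0 end).
  rewrite big_split_ord /=.
  rewrite [X in _ + X]big1 ?addr0; last first.
    by move=> i _; rewrite (unsplitK (inr i)) scale0r.
  by apply: eq_bigr => i _; rewrite (unsplitK (inl i)).
- exists (fun i => match split i with inl _ => 0 | inr y => k y end).
  rewrite big_split_ord /=.
  rewrite [X in X + _]big1 ?add0r; last first.
    by move=> i _; rewrite (unsplitK (inl i)) scale0r.
  by apply: eq_bigr => i _; rewrite (unsplitK (inr i)).
Qed.

Lemma span_outside (F : fieldType) (V : lmodType F) (n : nat)
  (w : 'I_n -> V * V) (T : {set 'I_n}) (s : 'I_n -> option bool) :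
  span_dim_le (section_pts w T s) #|T|.
Proof.
exists (fun i => let j := enum_val i in
          match s j with Some bb => pt (w j) bb | None => 0 end).
move=> v [j [jT [bb [sj ->]]]].
exists (fun i => if enum_val i == j then 1 else 0).
rewrite (bigD1 (enum_rank_in jT j)) //= enum_rankK_in // eqxx sj scale1r.
rewrite big1 ?addr0 // => i ni.
case: eqP => [ej|]; last by rewrite scale0r.
by move: ni; rewrite -{2}ej enum_valK_in eqxx.
Qed.

Theorem mainTheorem6 (F : fieldType) (V : lmodType F) (n : nat)
  (w : 'I_n -> V * V) :
  (2 <= n)%N ->
  (exists S : {set 'I_n}, (0 < #|S| < n)%N /\ legal_on w S) ->
  legal w.
Proof.
move=> _ [S [/andP [S0 Sn] HS]] s.
have H := span_union (HS s) (span_outside w (~: S) s).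
have E : (#|S|.-1 + #|~: S| = #|[set: 'I_n]|.-1)%N.
  rewrite cardsT card_ord.
  have := cardsC S; rewrite card_ord; lia.
rewrite -E.
case: H => b Hb; exists b => v [j [_ [bb [sj ->]]]].
apply: Hb; case: (boolP (j \in S)) => jS; [left|right];
  exists j; (split; [by rewrite ?inE|by exists bb]).
Qed.
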